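(* Let $N\in\mathbb{N}$ and $X_1,X_2\subseteq[N]$, $X=(X_1,X_2)$, and let $\mu=\mathbb{E}_{\sigma\sim S_N}[|X_\sigma|]$ (uniform $\sigma$). Then for every real $u\ge 6\mu$, $$\Pr_{\pi\sim S_N}\big[|X_\pi|\ge \mu+u\big]\le \exp\!\left(-\tfrac34 u\right).$$
   Context: For $\pi\in S_N$, $X_\pi=\{(i,j): i\in X_1,\ j\in X_2,\ \pi(i)=j\}$ is the set of $X$-pairs of $\pi$; $\pi\sim S_N$ denotes a uniformly random permutation. *)

(* Defs.v *)
From HB Require Import structures.
From mathcomp Require Import all_boot all_order all_algebra all_fingroup.
From mathcomp Require Import all_classical all_reals.
From mathcomp Require Import all_analysis.
Set Implicit Arguments. Unset Strict Implicit. Unset Printing Implicit Defensive.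
Import Order.TTheory GRing.Theory Num.Theory.
Local Open Scope ring_scope.

Definition Xpairs (N : nat) (X1 X2 : {set 'I_N}) (pi : 'S_N) : {set 'I_N * 'I_N} :=
  [set ij | [&& ij.1 \in X1, ij.2 \in X2 & pi ij.1 == ij.2]].

Definition Xmean (R : realType) (N : nat) (X1 X2 : {set 'I_N}) : R :=
  (\sum_(s : 'S_N) (#|Xpairs X1 X2 s|)%:R) / (#|{perm 'I_N}|)%:R.

Definition Xtail (R : realType) (N : nat) (X1 X2 : {set 'I_N}) (t : R) : R :=
  (#|[set pi : 'S_N | t <= (#|Xpairs X1 X2 pi|)%:R]|)%:R / (#|{perm 'I_N}|)%:R.

(* Main.v *)
Require Import Defs.
From HB Require Import structures.
From mathcomp Require Import all_boot all_order all_algebra all_fingroup.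
From mathcomp Require Import all_classical all_reals.
From mathcomp Require Import all_analysis.
From mathcomp Require Import zify ring lra.
Import Order.TTheory GRing.Theory Num.Theory.
Set Implicit Arguments. Unset Strict Implicit. Unset Printing Implicit Defensive.

Section NatPart.
Local Open Scope nat_scope.
Lemma NL1 b N k : b <= N -> b ^_ k * N ^ k <= b ^ k * N ^_ k.
Proof.
move=> bN; elim: k => [|k IH]; first by rewrite !ffactn0.
rewrite !ffactnSr !expnS.
have h : (b - k) * N <= b * (N - k) by nia.
have := leq_mul IH h.
move=> H; nia.
Qed.
Lemma NL2 a k : a ^_ k <= a ^ k.
Proof.
elim: k => [|k IH]; first by rewrite ffactn0.
by rewrite ffactnSr expnS mulnC; apply: leq_mul => //; apply: leq_subr.
Qed.

Lemma card_invol (T : finType) (f : T -> T) (A B : {set T}) :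
  involutive f -> (forall x, x \in A -> f x \in B) ->
  (forall x, x \in B -> f x \in A) -> #|A| = #|B|.
Proof.
move=> invf hAB hBA; have injf := inv_inj invf.
apply/eqP; rewrite eqn_leq; apply/andP; split.
- rewrite -(card_imset A injf); apply: subset_leq_card.
  by apply/fintype.subsetP=> y /imsetP [x xA ->]; apply: hAB.
- rewrite -(card_imset B injf); apply: subset_leq_card.
  by apply/fintype.subsetP=> y /imsetP [x xA ->]; apply: hBA.
Qed.

Lemma card_part (T U : finType) (f : T -> U) (A : {set T}) :
  #|A| = \sum_(u : U) #|[set x in A | f x == u]|.
Proof.
rewrite -sum1_card (partition_big f predT) //=.
apply: eq_bigr => u _; rewrite -sum1_card; apply: eq_bigl => x.
by rewrite inE.
Qed.

Definition Cnt N (S T : {set 'I_N}) :=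
  #|[set p : 'S_N | [forall x in S, p x \in T]]|.

Lemma core N k : forall S T : {set 'I_N}, #|S| = k ->
  Cnt S T * N ^_ k = N`! * #|T| ^_ k.
Proof.
elim: k => [|k IH] S T cS.
  rewrite !ffactn0 !muln1 /Cnt -card_Sn; apply: eq_card => p.
  rewrite !inE; apply/forallP => x; apply/implyP => xS.
  by move/eqP: cS; rewrite cards_eq0 => /eqP S0; rewrite S0 inE in xS.
have [s sS] : exists s, s \in S by apply/card_gt0P; rewrite cS.
set S' := S :\ s.
have cS' : #|S'| = k by move: cS; rewrite (cardsD1 s S) sS add1n => -[].
have [T0 | [t0 tT]] : T = finset.set0 \/ exists t0, t0 \in T.
  case: (finset.set_0Vmem T) => [->|[t ?]]; [by left | by right; exists t].
  rewrite T0 cards0 ffact0n /= muln0.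
  apply/eqP; rewrite muln_eq0; apply/orP; left.
  rewrite cards_eq0; apply/eqP/setP => p; rewrite !inE.
  apply/negP => /forallP /(_ s) /implyP /(_ sS); by rewrite inE.
set T' := T :\ t0.
have cT' : #|T'| = #|T|.-1 by rewrite (cardsD1 t0 T) tT.
set D := #|[set p : 'S_N | (p s == t0) && [forall x in S, p x \in T]]|.
have hA : Cnt S T = #|T| * D.
  rewrite /Cnt (card_part (fun p : 'S_N => p s)).
  rewrite (eq_bigr (fun u => if u \in T then D else 0)); last first.
    move=> u _; case: ifP => uT.
      apply: (card_invol (f := fun p => (p * tperm u t0)%g)).
      - by move=> p; apply/permP => x; rewrite !permM tpermK.
      - move=> p; rewrite !inE => /andP [/forallP hp /eqP pu].
        rewrite permM pu tpermL eqxx /=; apply/forallP => x; apply/implyP => xS.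
        rewrite permM; move: (implyP (hp x) xS) => pxT.
        by case: tpermP => *; by [exact: tT | exact: uT | exact: pxT].
      - move=> p; rewrite !inE => /andP [/eqP pu /forallP hp].
        rewrite permM pu tpermR eqxx andbT; apply/forallP => x; apply/implyP => xS.
        rewrite permM; move: (implyP (hp x) xS) => pxT.
        by case: tpermP => *; by [exact: tT | exact: uT | exact: pxT].
    apply/eqP; rewrite cards_eq0; apply/eqP/setP => p; rewrite !inE.
    apply/negP => /andP [/forallP /(_ s) /implyP /(_ sS) psT /eqP psu].
    by rewrite psu uT in psT.
  by rewrite -big_mkcond /= sum_nat_const mulnC.
have hB : Cnt S' T' = (N - k) * D.
  rewrite /Cnt (card_part (fun p : 'S_N => (p^-1)%g t0)).
  rewrite (eq_bigr (fun y => if y \in S' then 0 else D)); last first.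
    move=> y _; case: ifP => yS.
      apply/eqP; rewrite cards_eq0; apply/eqP/setP => p; rewrite !inE.
      apply/negP => /andP [/forallP /(_ y) /implyP /(_ yS)].
      move=> h /eqP e; move: h; rewrite -e permKV /T' !inE eqxx //.
    apply: (card_invol (f := fun p => (tperm y s * p)%g)).
    - by move=> p; rewrite mulgA tperm2 mul1g.
    - move=> p; rewrite !inE => /andP [/forallP hp /eqP py].
      have pyt : p y = t0 by rewrite -py permKV.
      rewrite permM tpermR pyt eqxx /=; apply/forallP => x; apply/implyP => xS.
      rewrite permM; case: (x =P s) => [->|/eqP xs]; first by rewrite tpermR pyt.
      have xS' : x \in S' by rewrite !inE xs.
      have xy : y != x by apply/eqP => e; rewrite e xS' in yS.
      rewrite tpermD //; last by rewrite eq_sym.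
      by move: (implyP (hp x) xS'); rewrite inE => /andP [].
    - move=> p; rewrite !inE => /andP [/eqP ps /forallP hp].
      apply/andP; split.
        apply/forallP => x; apply/implyP => xS'.
        move: (xS'); rewrite !inE => /andP [xs xS].
        have xy : y != x by apply/eqP => e; rewrite e xS' in yS.
        rewrite permM tpermD //; last by rewrite eq_sym.
        rewrite (implyP (hp x) xS) andbT; apply/eqP => e.
        by move: xs; rewrite -ps in e; rewrite (perm_inj e) eqxx.
      apply/eqP; apply: (@perm_inj _ (tperm y s * p)%g).
      by rewrite permKV permM tpermL ps.
  rewrite (eq_bigr (fun y => if y \notin S' then D else 0)); last by move=> y _; case: (y \in S').
  rewrite -big_mkcond /= sum_nat_const.
  have cC : #|~: S'| = N - k by have := cardsC S'; rewrite card_ord cS'; lia.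
  rewrite -cC; congr (_ * _); apply: eq_card => y; rewrite [in RHS]inE //.
rewrite ffactnSr ffactnS hA mulnA.
rewrite -[in RHS]cT' mulnCA -(IH S' T' cS') hB. lia.
Qed.


Lemma Xpairs_card N (X1 X2 : {set 'I_N}) (p : 'S_N) :
  #|Xpairs X1 X2 p| = #|[set i in X1 | p i \in X2]|.
Proof.
have -> : Xpairs X1 X2 p = (fun i => (i, p i)) @: [set i in X1 | p i \in X2].
  apply/setP => -[i j]; rewrite !inE /=; apply/idP/idP.
    move=> /and3P [iX jX /eqP e]; apply/imsetP; exists i => //.
      by rewrite inE iX e.
    by rewrite e.
  case/imsetP => x; rewrite inE => /andP [xX pX] [-> ->].
  by rewrite xX pX eqxx.
by apply: card_imset => x y [].
Qed.

Lemma card_sum_bool (T : finType) (A : {set T}) (q : pred T) :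
  #|[set i in A | q i]| = \sum_(i in A) (q i : nat).
Proof.
rewrite -sum1_card big_mkcond /= [RHS]big_mkcond /=; apply: eq_bigr => i _.
by rewrite !inE; case: (i \in A); case: (q i).
Qed.

Lemma Cnt1 N (i : 'I_N) (T : {set 'I_N}) :
  Cnt [set i] T = #|[set p : 'S_N | p i \in T]|.
Proof.
apply: eq_card => p; rewrite !inE; apply/forallP/idP.
  by move=> /(_ i); rewrite inE eqxx.
by move=> h x; apply/implyP; rewrite inE => /eqP ->.
Qed.

Lemma sumX N (X1 X2 : {set 'I_N}) :
  (\sum_(p : 'S_N) #|Xpairs X1 X2 p|) * N = #|X1| * (N`! * #|X2|).
Proof.
rewrite (eq_bigr (fun p : 'S_N => \sum_(i in X1) ((p i \in X2) : nat)));
  last by move=> p _; rewrite Xpairs_card card_sum_bool.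
rewrite exchange_big /= big_distrl /=.
rewrite (eq_bigr (fun _ => N`! * #|X2|)) ?sum_nat_const //.
move=> i _.
have := core X2 (cards1 i); rewrite !ffactn1 => <-.
congr (_ * _); rewrite Cnt1 -sum1_card [in RHS]big_mkcond /=; apply: eq_bigr => p _; rewrite inE; by case: (p i \in X2).
Qed.

Lemma sub_card (T : finType) (A : {set T}) k :
  k <= #|A| -> exists S : {set T}, S \subset A /\ #|S| = k.
Proof.
move=> kA; exists [set x in take k (enum A)]; split.
  apply/fintype.subsetP => x; rewrite inE => /mem_take; by rewrite mem_enum.
rewrite cardsE; move/card_uniqP: (take_uniq k (enum_uniq (mem A))) => ->.
by rewrite size_takel // -cardE.
Qed.

Lemma tail_bound N (X1 X2 : {set 'I_N}) k :
  #|[set p : 'S_N | k <= #|Xpairs X1 X2 p|]| <=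
  \sum_(S in [set S : {set 'I_N} | (S \subset X1) && (#|S| == k)]) Cnt S X2.
Proof.
set D := [set S : {set 'I_N} | _].
have step : forall p : 'S_N, p \in [set p : 'S_N | k <= #|Xpairs X1 X2 p|] ->
   1 <= \sum_(S in D) ([forall x in S, p x \in X2] : nat).
  move=> p; rewrite inE Xpairs_card => /sub_card [S [sS cS]].
  have SD : S \in D by rewrite inE cS eqxx andbT; apply: fintype.subset_trans sS _;
     apply/fintype.subsetP => x; rewrite inE => /andP [].
  rewrite (bigD1 S) //=.
  have -> : [forall x in S, p x \in X2].
    apply/forallP => x; apply/implyP => xS.
    by move/fintype.subsetP: sS => /(_ x xS); rewrite inE => /andP [].
  by [].
apply: (@leq_trans (\sum_(p : 'S_N) \sum_(S in D) ([forall x in S, p x \in X2] : nat))).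
  rewrite -sum1_card [X in _ <= X](bigID (fun p => p \in [set p : 'S_N | k <= #|Xpairs X1 X2 p|])) /=.
  apply: leq_trans (leq_addr _ _); apply: leq_sum => p pP; exact: step.
rewrite exchange_big /=; apply: leq_sum => S _.
rewrite /Cnt -[in X in _ <= X](finset.setTI [set p : 'S_N | _]).
rewrite (eq_card (B := [set p in [set: 'S_N] | [forall x in S, p x \in X2]])).
  by rewrite card_sum_bool; apply: eq_leq; apply: eq_bigl => p; rewrite inE.
by move=> p; rewrite !inE.
Qed.

End NatPart.

Local Open Scope ring_scope.

Lemma powle (R : realType) (n : nat) (x y : R) : 0 <= x -> x <= y -> x ^+ n <= y ^+ n.
Proof.
move=> x0 xy; apply: lerXn2r => //; rewrite nnegrE //; exact: le_trans xy.
Qed.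

Lemma step_e (R : realType) (k : nat) : (k.+1%:R : R) ^+ k <= expR 1 * (k%:R) ^+ k.
Proof.
case: k => [|k]; first by rewrite !expr0 mulr1 (le_trans _ (expR_ge1Dx 1)) // lerDl.
set m := k.+1.
have m0 : (0 : R) < m%:R by rewrite ltr0n.
have -> : (m.+1%:R : R) = m%:R * (1 + m%:R^-1).
  by rewrite mulrDr mulr1 mulfV ?gt_eqF // -natr1.
rewrite exprMn [X in _ <= X]mulrC; apply: ler_wpM2l; first by apply: exprn_ge0; exact: ltW.
have -> : expR (1 : R) = expR (m%:R^-1) ^+ m.
  by rewrite -expRM_natl mulfV ?gt_eqF.
apply: powle; last exact: expR_ge1Dx.
by apply: addr_ge0 => //; rewrite invr_ge0 ltW.
Qed.

Lemma kk_fact (R : realType) (k : nat) : (k%:R : R) ^+ k <= k`!%:R * expR 1 ^+ k.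
Proof.
elim: k => [|k IH]; first by rewrite !expr0 mulr1.
rewrite exprS factS natrM exprS.
rewrite -mulrA; apply: ler_wpM2l => //.
apply: (le_trans (step_e _ k)).
rewrite mulrCA; apply: ler_wpM2l; first exact: ltW (expR_gt0 _).
exact: IH.
Qed.

Lemma e74 (R : realType) : expR (7 / 4 : R) <= 7.
Proof.
have h8 : expR (1 / 8 : R) <= 8 / 7.
  have h1 := expR_ge1Dx (- (1 / 8) : R).
  have h2 := expRxMexpNx_1 (1 / 8 : R).
  have hp := expR_gt0 (1 / 8 : R).
  nra.
have -> : (7 / 4 : R) = 14%:R * (1 / 8) by rewrite -[14%:R]/(14 : R); lra.
rewrite expRM_natl.
apply: (le_trans (powle 14 (ltW (expR_gt0 _)) h8)).
have r2 : ((8 / 7 : R) ^+ 2) <= 131 / 100 by rewrite expr2; lra.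
have r4 : ((8 / 7 : R) ^+ 4) <= 172 / 100.
  have -> : (8/7 : R)^+4 = ((8/7)^+2)^+2 by rewrite -exprM.
  apply: (le_trans (powle 2 _ r2)); first by apply: exprn_ge0; lra.
  rewrite expr2; lra.
have r8 : ((8 / 7 : R) ^+ 8) <= 296 / 100.
  have -> : (8/7 : R)^+8 = ((8/7)^+4)^+2 by rewrite -exprM.
  apply: (le_trans (powle 2 _ r4)); first by apply: exprn_ge0; lra.
  rewrite expr2; lra.
have -> : (8/7 : R)^+14 = (8/7)^+8 * (8/7)^+4 * (8/7)^+2 by rewrite -!exprD.
have p2 : 0 <= ((8 / 7 : R) ^+ 2) by apply: exprn_ge0; lra.
have p4 : 0 <= ((8 / 7 : R) ^+ 4) by apply: exprn_ge0; lra.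
have p8 : 0 <= ((8 / 7 : R) ^+ 8) by apply: exprn_ge0; lra.
nra.
Qed.

Lemma final_bound (R : realType) (mu u : R) (k : nat) :
  0 <= mu -> 7 * mu <= k%:R -> u <= k%:R ->
  mu ^+ k / k`!%:R <= expR (- (3 / 4 * u)).
Proof.
move=> mu0 hk hu.
have f0 : (0 : R) < k`!%:R by rewrite ltr0n fact_gt0.
have e0 := expR_gt0 (1 : R).
apply: (@le_trans _ _ ((expR 1 / 7) ^+ k)).
  rewrite ler_pdivrMr // exprMn exprVn.
  apply: (@le_trans _ _ ((k%:R / 7) ^+ k)).
    by apply: powle => //; lra.
  rewrite exprMn exprVn -mulrA [_^-1 * _]mulrC mulrA.
  rewrite ler_pM2r; last by rewrite invr_gt0 exprn_gt0.
  by rewrite mulrC kk_fact.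
apply: (@le_trans _ _ (expR (- (3 / 4 * k%:R)))); last first.
  by rewrite ler_expR; lra.
rewrite -mulNr expRM_natr.
apply: powle; first by apply: divr_ge0; [exact: ltW | lra].
rewrite ler_pdivrMr; last by lra.
have h := e74 R.
rewrite (_ : (7 / 4 : R) = 1 + 3 / 4) in h; last by lra.
rewrite expRD in h.
have hn := expRxMexpNx_1 (3 / 4 : R).
have p := expR_gt0 (- (3 / 4) : R).
have p' := expR_gt0 (3 / 4 : R).
nra.
Qed.

Lemma eqle (R : realType) (x y : R) : x = y -> x <= y.
Proof. by move->. Qed.

Theorem theorem3 (R : realType) (N : nat) (X1 X2 : {set 'I_N}) (u : R) :
  6 * Xmean R X1 X2 <= u ->
  Xtail X1 X2 (Xmean R X1 X2 + u) <= expR (- (3 / 4 * u)).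
Proof.
move=> hu.
set mu := Xmean R X1 X2.
have hu2 : 6 * mu <= u by exact: hu.
set Sg := (\sum_(s : 'S_N) #|Xpairs X1 X2 s|)%N.
have F0 : (0 : R) < N`!%:R by rewrite ltr0n fact_gt0.
have muE : mu = Sg%:R / N`!%:R by rewrite /mu /Xmean natr_sum card_Sn.
have mu0 : 0 <= mu by rewrite muE divr_ge0 // ltW.
have u0 : 0 <= u by apply: le_trans hu; rewrite mulr_ge0.
set x := mu + u.
have x0 : 0 <= x by rewrite /x addr_ge0.
have exk : exists m : nat, x <= m%:R by exists (Num.trunc x).+1; exact: ltW (truncnS_gt x).
case: (ex_minnP exk) => k hk kmin.
have aN : (#|X1| <= N)%N by rewrite -[X in (_ <= X)%N](card_ord N) max_card.
have bN : (#|X2| <= N)%N by rewrite -[X in (_ <= X)%N](card_ord N) max_card.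
set B : R := 'C(#|X1|, k)%:R * (#|X2| ^_ k)%:R / (N ^_ k)%:R.
have XB : Xtail X1 X2 x <= B.
  rewrite /Xtail card_Sn ler_pdivrMr //.
  set D := [set S : {set 'I_N} | (S \subset X1) && (#|S| == k)].
  apply: (@le_trans _ _ (\sum_(S in D) Cnt S X2)%N%:R).
    rewrite ler_nat; apply: leq_trans (tail_bound X1 X2 k).
    apply: subset_leq_card; apply/fintype.subsetP => p; rewrite !inE => hp.
    exact: kmin.
  rewrite natr_sum.
  rewrite (eq_bigr (fun _ => N`!%:R * (#|X2| ^_ k)%:R / (N ^_ k)%:R)); last first.
    move=> S; rewrite inE => /andP [_ /eqP cS].
    have kN : (k <= N)%N by rewrite -cS -[X in (_ <= X)%N](card_ord N) max_card.
    have P0 : (0 : R) < (N ^_ k)%:R by rewrite ltr0n ffact_gt0.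
    have := core X2 cS; move/(congr1 (fun n : nat => n%:R : R)); rewrite !natrM => e.
    by rewrite -e mulfK // gt_eqF.
  rewrite sumr_const cards_draws.
  apply: eqle; rewrite /B -mulr_natl; ring.
apply: (le_trans XB).
apply: (@le_trans _ _ (mu ^+ k / k`!%:R)); last first.
  apply: final_bound => //.
    apply: le_trans hk; rewrite /x; lra.
  apply: le_trans hk; rewrite /x; lra.
have K0 : (0 : R) < k`!%:R by rewrite ltr0n fact_gt0.
case: (ltnP N k) => [Nk|kN].
  rewrite /B bin_small; last by apply: leq_ltn_trans aN Nk.
  by rewrite !mul0r divr_ge0 // ?exprn_ge0 // ltW.
rewrite /B; clear XB B.
case: k hk kmin kN K0 => [|k] hk kmin kN K0.
  by rewrite bin0 !ffactn0 !expr0 !mul1r invr1.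
have N0 : (0 < N)%N by apply: leq_trans kN.
have NR : (0 : R) < N%:R by rewrite ltr0n.
have muN : mu = #|X1|%:R * #|X2|%:R / N%:R.
  have := sumX X1 X2; move/(congr1 (fun n : nat => n%:R : R)); rewrite !natrM => e.
  rewrite muE -[Sg%:R](mulfK (x := N%:R)) ?gt_eqF // e.
  by field; rewrite !gt_eqF.
have PK : (0 : R) < (N ^_ k.+1)%:R by rewrite ltr0n ffact_gt0.
have h1 : ('C(#|X1|, k.+1))%:R <= (#|X1|%:R ^+ k.+1 / k.+1`!%:R : R).
  rewrite ler_pdivlMr // -natrM bin_ffact -natrX ler_nat; exact: NL2.
have h2 : ((#|X2| ^_ k.+1)%:R / (N ^_ k.+1)%:R : R) <= #|X2|%:R ^+ k.+1 / N%:R ^+ k.+1.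
  rewrite ler_pdivrMr // mulrAC ler_pdivlMr ?exprn_gt0 //.
  rewrite -!natrX -!natrM ler_nat; exact: NL1.
rewrite -mulrA.
apply: (le_trans (ler_pM _ _ h1 h2)) => //.
rewrite muN !exprMn !exprVn; apply: eqle; field.
by rewrite !gt_eqF // exprn_gt0.
Qed.
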